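(* Let $T=\{0,\dots,N\}$ and $\mathbb{F}$ a field. Let $C_\bullet$, $C'_\bullet$ be filtrations of finite-dimensional chain complexes $C$, $C'$ over $\mathbb{F}$ with filtration compatible ordered bases $\mathfrak{C}=(c_1,\dots,c_n)$, $\mathfrak{C}'=(c'_1,\dots,c'_n)$ and filtration boundary matrices $D$, $D'$. Let $\varphi_\bullet\colon C_\bullet\to C'_\bullet$ be an injective morphism of filtrations of chain complexes with $\varphi=\varphi_N$ an isomorphism, $F$ its matrix with respect to $\mathfrak{C},\mathfrak{C}'$, and $D^{\varphi}=DF^{-1}=F^{-1}D'$. Let $V$, $V^{\varphi}$ be invertible upper-triangular matrices such that $R=DV$ and $R^{\varphi}=D^{\varphi}V^{\varphi}$ are reduced; interpret columns of $R,V,R^{\varphi}$ as coordinate vectors with respect to $\mathfrak{C}$ (elements of $C$) and columns of $FR^{\varphi}$ and $FV$ as coordinate vectors with respect to $\mathfrak{C}'$ (elements of $C'$). Then the family \[ \mathfrak{Z}=\operatorname{cols}FR^{\varphi}\cup\{Fv_j\mid r_j=0 \text{ and } j\notin\operatorname{pivs}R^{\varphi}\} \] is a filtration compatible basis for the filtration $\varphi_\bullet(Z_*(C_\bullet))$, $t\mapsto\varphi_t(\ker\partial|_{C_t})$, and for all $z\in\mathfrak{Z}$, \[ \operatorname{supp}_{\varphi_\bullet(Z_*(C_\bullet))}(z)=\operatorname{supp}_{C_\bullet}(F^{-1}z). \]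
   Context: A chain complex is a finite-dimensional graded vector space with differential $\partial$ of degree $-1$, $\partial^2=0$; a filtration of chain complexes is a chain of subcomplexes $C_0\subseteq\dots\subseteq C_N=C$. Support: $\operatorname{supp}_{M_\bullet}(m)=\{t\mid m\in M_t\}$. A basis $\mathfrak{M}$ of $M_N$ is filtration compatible if $\mathfrak{M}\cap M_t$ is a basis of $M_t$ for all $t$; an ordered such basis is a filtration compatible ordered basis if $m\le m'$ implies $\operatorname{supp}(m')\subseteq\operatorname{supp}(m)$. The filtration boundary matrix is the matrix of $\partial$ in that basis. For a matrix $X$, $x_j$ is its $j$-th column, $\operatorname{cols}X$ the family of its nonzero columns; $\operatorname{piv}x_j$ is the largest row index of a nonzero entry of a nonzero column; $\operatorname{pivs}X$ is the set of all pivots of nonzero columns; $X$ is reduced if no two nonzero columns have the same pivot. *)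

(* Defs.v *)
From HB Require Import structures.
From mathcomp Require Import all_boot all_order all_algebra.
Set Implicit Arguments. Unset Strict Implicit. Unset Printing Implicit Defensive.
Import GRing.Theory.
Local Open Scope ring_scope.

(* Vectors of C are coordinate column vectors 'cV[K]_n w.r.t. the fixed
   ordered basis; the i-th basis vector is [evec i]. *)
Definition evec (K : fieldType) (n : nat) (i : 'I_n) : 'cV[K]_n := delta_mx i 0.

Definition piv (K : fieldType) (n : nat) (x : 'cV[K]_n) : nat :=
  \max_(i < n | x i 0 != 0) (i : nat).

Definition pivs (K : fieldType) (m n : nat) (X : 'M[K]_(m, n)) : pred nat :=
  fun i => [exists j : 'I_n, (col j X != 0) && (piv (col j X) == i)].

Definition reduced (K : fieldType) (m n : nat) (X : 'M[K]_(m, n)) : Prop :=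
  forall j1 j2 : 'I_n, j1 != j2 -> col j1 X != 0 -> col j2 X != 0 ->
    piv (col j1 X) != piv (col j2 X).

Definition upper_trig (K : fieldType) (n : nat) (V : 'M[K]_n) : Prop :=
  forall i j : 'I_n, (j < i)%N -> V i j = 0.

Definition filtration (K : fieldType) (n N : nat) (D : 'M[K]_n)
  (Ct : 'I_N.+1 -> {vspace 'cV[K]_n}) : Prop :=
  [/\ forall s t : 'I_N.+1, (s <= t)%N -> (Ct s <= Ct t)%VS,
      Ct ord_max = fullv &
      forall (t : 'I_N.+1) (x : 'cV[K]_n), x \in Ct t -> D *m x \in Ct t].

(* The standard (ordered) basis is a filtration compatible ordered basis:
   for each t, the basis vectors lying in C_t form a basis of C_t, and
   i <= j implies supp(c_j) \subseteq supp(c_i). *)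
Definition fc_ordered_std_basis (K : fieldType) (n N : nat)
  (Ct : 'I_N.+1 -> {vspace 'cV[K]_n}) : Prop :=
  (forall t : 'I_N.+1,
     basis_of (Ct t) [seq evec K i | i <- enum 'I_n & evec K i \in Ct t])
  /\ (forall i j : 'I_n, (i <= j)%N ->
        forall t : 'I_N.+1, evec K j \in Ct t -> evec K i \in Ct t).

Definition phiZ (K : fieldType) (n N : nat) (D F : 'M[K]_n)
  (Ct : 'I_N.+1 -> {vspace 'cV[K]_n}) (t : 'I_N.+1) : {vspace 'cV[K]_n} :=
  (linfun (mulmx F) @: (Ct t :&: lker (linfun (mulmx D))))%VS.

(* Main.v *)
Require Import Defs.
From HB Require Import structures.
From mathcomp Require Import all_boot all_order all_algebra.
Import GRing.Theory.
Local Open Scope ring_scope.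
Set Implicit Arguments. Unset Strict Implicit.







Section Piv.
Variables (K : fieldType) (n : nat).
Implicit Types x y : 'cV[K]_n.

Lemma piv_ge x (i : 'I_n) : x i 0 != 0 -> (i <= piv x)%N.
Proof. by move=> h; rewrite /piv (leq_bigmax_cond i). Qed.

Lemma piv_above x (k : 'I_n) : (piv x < k)%N -> x k 0 = 0.
Proof. by move=> h; apply/eqP; apply: contraTT h => /piv_ge; rewrite -leqNgt. Qed.

Lemma piv_attained x : x != 0 -> exists i : 'I_n, (i : nat) = piv x /\ x i 0 != 0.
Proof.
move=> nz.
have [i hi] : exists i : 'I_n, x i 0 != 0.
  apply/existsP; apply: contraNT nz => /existsPn h; apply/eqP/matrixP => a b.
  by rewrite (ord1 b) mxE; apply/eqP; have := h a; rewrite negbK.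
rewrite /piv; case: (@eq_bigmax_cond _ [pred j : 'I_n | x j 0 != 0] (fun j => (j:nat))).
  by apply/card_gt0P; exists i.
by move=> j hj ->; exists j.
Qed.

Lemma piv_eq x (p : 'I_n) : x p 0 != 0 -> (forall k : 'I_n, (p < k)%N -> x k 0 = 0) -> piv x = p.
Proof.
move=> hp ha; apply/eqP; rewrite eqn_leq piv_ge // andbT /piv.
apply/bigmax_leqP => k hk; rewrite leqNgt; apply/negP => /ha; exact/eqP.
Qed.

Lemma L1 (I : finType) (Q : pred I) (u : I -> 'cV[K]_n) (c : I -> K) (i1 : I) :
 (forall i, Q i -> u i != 0) ->
 (forall i j, Q i -> Q j -> piv (u i) = piv (u j) -> i = j) -> Q i1 -> c i1 != 0 ->
 exists i0, [/\ Q i0, c i0 != 0, \sum_(i | Q i) c i *: u i != 0 &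
        piv (\sum_(i | Q i) c i *: u i) = piv (u i0)].
Proof.
move=> nz inj Q1 c1.
case: (@arg_maxnP I i1 (fun i => Q i && (c i != 0)) (fun i => piv (u i))); first by rewrite Q1 c1.
move=> i0 /andP[Q0 c0] hmax; exists i0.
have [p0 [hp0 up0]] := piv_attained (nz _ Q0).
have E : (\sum_(i | Q i) c i *: u i) p0 0 = c i0 * u i0 p0 0.
  rewrite summxE (bigD1 i0) //= mxE big1 ?addr0 // => i /andP[Qi ne].
  rewrite mxE; have [->|ci] := eqVneq (c i) 0; first by rewrite mul0r.
  have hle : (piv (u i) <= piv (u i0))%N by apply: (hmax i); rewrite Qi ci.
  rewrite piv_above ?mulr0 // hp0 ltn_neqAle hle andbT.
  by apply/eqP => /(inj _ _ Qi Q0) /eqP; rewrite (negbTE ne).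
have nzE : (\sum_(i | Q i) c i *: u i) p0 0 != 0 by rewrite E mulf_neq0.
split => //.
- apply: contraNN nzE => /eqP ->; by rewrite mxE.
- rewrite -hp0; apply: piv_eq.
    by rewrite E mulf_neq0.
  move=> k hk; rewrite summxE big1 // => i Qi; rewrite mxE.
  have [->|ci] := eqVneq (c i) 0; first by rewrite mul0r.
  have hle : (piv (u i) <= piv (u i0))%N by apply: (hmax i); rewrite Qi ci.
  by rewrite piv_above ?mulr0 //; apply: leq_trans hk; rewrite ltnS hp0.
Qed.
End Piv.

Section Mem.
Variables (K : fieldType) (n N : nat) (Ct : 'I_N.+1 -> {vspace 'cV[K]_n}).
Hypothesis fc : fc_ordered_std_basis Ct.

Lemma mem_evec (t : 'I_N.+1) (x : 'cV[K]_n) (i : 'I_n) :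
  x \in Ct t -> x i 0 != 0 -> evec K i \in Ct t.
Proof.
case: fc => hb _ xin; apply: contraTT => ni.
set X := [seq evec K i | i <- enum 'I_n & evec K i \in Ct t].
have : x \in <<in_tuple X>>%VS by rewrite (span_basis (hb t)).
move/coord_span => ->; rewrite summxE big1 ?eqxx // => k _; rewrite mxE.
have : X`_k \in X.
  by apply: mem_nth; rewrite (ltn_ord k).
case/mapP => j; rewrite mem_filter => /andP[jin _] ->.
rewrite /evec mxE; case: eqVneq => [eij|]; last by rewrite mulr0.
by move: ni; rewrite eij jin.
Qed.

Lemma mem_below (t : 'I_N.+1) (x y : 'cV[K]_n) :
  x \in Ct t -> x != 0 -> (forall k : 'I_n, (piv x < k)%N -> y k 0 = 0) -> y \in Ct t.
Proof.
move=> xin xnz hy.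
have [p [hp xp]] := piv_attained xnz.
have ep := mem_evec xin xp.
rewrite (matrix_sum_delta y); apply: memv_suml => i _; rewrite big_ord1.
have [->|yi] := eqVneq (y i 0) 0; first by rewrite scale0r mem0v.
apply: memvZ; case: fc => _ /(_ i p); apply => //.
by rewrite hp leqNgt; apply: contra yi => /hy ->.
Qed.
End Mem.
Lemma colM (K : fieldType) (n : nat) (A B : 'M[K]_n) (j : 'I_n) :
  col j (A *m B) = A *m col j B.
Proof. by rewrite !colE mulmxA. Qed.

Lemma mul_col_sum (K : fieldType) (n : nat) (A : 'M[K]_n) (y : 'cV[K]_n) :
  A *m y = \sum_j y j 0 *: col j A.
Proof.
apply/matrixP => a b; rewrite (ord1 b) !mxE summxE; apply: eq_bigr => j _.
by rewrite !mxE mulrC.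
Qed.

Lemma unit_mul_eq0 (K : fieldType) (n : nat) (F : 'M[K]_n) (y : 'cV[K]_n) :
  F \in unitmx -> (F *m y == 0) = (y == 0).
Proof.
move=> Fu; apply/eqP/eqP => [h|->]; last by rewrite mulmx0.
by rewrite -(mulKmx Fu y) h mulmx0.
Qed.

Lemma trig_diag (K : fieldType) (n : nat) (V : 'M[K]_n) :
  V \in unitmx -> upper_trig V -> forall j, V j j != 0.
Proof.
move=> Vu Vt j; move: Vu; rewrite -unitmx_tr unitmxE unitfE det_trig.
  by rewrite (prodf_seq_neq0) => /allP /(_ j (mem_index_enum _)); rewrite mxE.
by apply/is_trig_mxP => a b ab; rewrite mxE Vt.
Qed.

Lemma piv_colV (K : fieldType) (n : nat) (V : 'M[K]_n) :
  V \in unitmx -> upper_trig V -> forall j, piv (col j V) = j.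
Proof.
move=> Vu Vt j; apply: piv_eq; first by rewrite mxE trig_diag.
by move=> k jk; rewrite mxE Vt.
Qed.

Lemma colV_nz (K : fieldType) (n : nat) (V : 'M[K]_n) :
  V \in unitmx -> upper_trig V -> forall j, col j V != 0.
Proof.
move=> Vu Vt j; apply/eqP => /matrixP /(_ j 0); rewrite !mxE => /eqP.
by rewrite (negbTE (trig_diag Vu Vt j)).
Qed.
Unset Implicit Arguments. Set Strict Implicit.
Theorem lemma3p8 (K : fieldType) (N n : nat)
  (D D' : 'M[K]_n)
  (Ct Ct' : 'I_N.+1 -> {vspace 'cV[K]_n})
  (F V Vphi : 'M[K]_n) :
  D *m D = 0 -> D' *m D' = 0 ->
  filtration D Ct -> filtration D' Ct' ->
  fc_ordered_std_basis Ct -> fc_ordered_std_basis Ct' ->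
  F *m D = D' *m F ->
  (forall (t : 'I_N.+1) (x : 'cV[K]_n), x \in Ct t -> F *m x \in Ct' t) ->
  F \in unitmx ->
  V \in unitmx -> upper_trig V ->
  Vphi \in unitmx -> upper_trig Vphi ->
  let Dphi := D *m invmx F in
  let R := D *m V in
  let Rphi := Dphi *m Vphi in
  reduced R -> reduced Rphi ->
  let z : 'I_n + 'I_n -> 'cV[K]_n :=
    fun k => match k with
             | inl j => col j (F *m Rphi)
             | inr j => F *m col j V
             end in
  let inZ : pred ('I_n + 'I_n) :=
    fun k => match k with
             | inl j => col j (F *m Rphi) != 0
             | inr j => (col j R == 0) && ~~ pivs Rphi j
             end in
  (forall t : 'I_N.+1,
     basis_of (phiZ D F Ct t)
       [seq z k | k <- enum {: 'I_n + 'I_n}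
                  & inZ k && (z k \in phiZ D F Ct t)])
  /\ (forall k, inZ k -> forall t : 'I_N.+1,
        (z k \in phiZ D F Ct t) = (invmx F *m z k \in Ct t)).
Proof.
move=> DD _ _ _ fcC _ _ _ Fu Vu Vt _ _ Dphi R Rphi redR redRp z inZ.
pose w (k : 'I_n + 'I_n) : 'cV[K]_n :=
  match k with inl j => col j Rphi | inr j => col j V end.
pose inZw (k : 'I_n + 'I_n) : bool :=
  match k with inl j => col j Rphi != 0
             | inr j => (col j R == 0) && ~~ pivs Rphi j end.
pose W t := (Ct t :&: lker (linfun (mulmx D)))%VS.
have memW t x : (x \in W t) = (x \in Ct t) && (D *m x == 0).
  by rewrite memv_cap memv_ker lfunE.
have memphi t y : (F *m y \in phiZ D F Ct t) = (y \in W t).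
  apply/idP/idP => [|yW]; last first.
    by rewrite /phiZ (_ : F *m y = linfun (mulmx F) y) ?memv_img // lfunE.
  case/memv_imgP => y' y'W; rewrite lfunE /= => /eqP.
  by rewrite -subr_eq0 -mulmxBr unit_mul_eq0 // subr_eq0 => /eqP ->.
have zF k : z k = F *m w k by case: k => j //=; rewrite colM.
have inZE k : inZ k = inZw k by case: k => j //=; rewrite colM unit_mul_eq0.
have Dw k : inZw k -> D *m w k = 0.
  case: k => j /=.
    by move=> _; rewrite -colM /Rphi /Dphi !mulmxA DD !mul0mx /col; apply/matrixP => a b; rewrite !mxE.
  by case/andP => /eqP; rewrite /R colM.
split; last first.
  move=> k; rewrite inZE => hk t; rewrite zF memphi mulKmx // memW Dw // eqxx andbT //.
move=> t.
set s := [seq w k | k <- enum {: 'I_n + 'I_n} & inZw k && (w k \in W t)].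
have -> : [seq z k | k <- enum {: 'I_n + 'I_n} & inZ k && (z k \in phiZ D F Ct t)]
          = map (linfun (mulmx F)) s.
  rewrite /s -map_comp; rewrite (eq_filter (a2 := fun k => inZw k && (w k \in W t))).
    by apply: eq_map => k /=; rewrite lfunE zF.
  by move=> k; rewrite inZE zF memphi.
have lk0 : (W t :&: lker (linfun (mulmx F)) = 0)%VS.
  apply/eqP; rewrite -subv0; apply/subvP => x; rewrite memv_cap memv_ker lfunE memv0.
  by case/andP => _; rewrite /= unit_mul_eq0.
rewrite /phiZ -/(W t); apply: limg_basis_of => //.
have sW : {subset s <= W t}.
  by move=> y /mapP [k]; rewrite mem_filter => /andP[/andP[_ h] _] ->.
have pivV := piv_colV Vu Vt.
have nzV := colV_nz Vu Vt.
have F1 (x : 'cV[K]_n) (im : 'I_n) : D *m x = 0 -> x im 0 != 0 ->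
    (forall k : 'I_n, (im < k)%N -> x k 0 = 0) -> col im R == 0.
  move=> Dx xim hab.
  pose y := invmx V *m x.
  have xE : x = \sum_j y j 0 *: col j V by rewrite -mul_col_sum /y mulKVmx.
  have ynz : y != 0.
    apply: contraNneq xim => y0; by rewrite xE big1 ?mxE // => j _; rewrite y0 mxE scale0r.
  have [i1 [_ yi1]] := piv_attained ynz.
  have [i0 [_ yi0 _ pe]] := @L1 _ _ _ (fun _ => true) (fun j => col j V) (fun j => y j 0) i1
     (fun j _ => nzV j) (fun a b _ _ h => val_inj (etrans (esym (pivV a)) (etrans h (pivV b)))) isT yi1.
  have pxm : piv x = im by apply: piv_eq.
  have i0m : i0 = im by apply: val_inj; rewrite /= -(pivV i0) -pe -xE pxm.
  apply: contraTT isT => Rnz.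
  have injR : forall a b, col a R != 0 -> col b R != 0 -> piv (col a R) = piv (col b R) -> a = b.
    move=> a b ha hb h; case: (eqVneq a b) => // /(redR _ _) /(_ ha hb); by rewrite h eqxx.
  have yim : y im 0 != 0 by rewrite -i0m.
  have [i2 [_ _ snz _]] := @L1 _ _ _ (fun j => col j R != 0) (fun j => col j R) (fun j => y j 0) im
     (fun j h => h) injR Rnz yim.
  - exfalso; move/negP: snz; apply.
    have : D *m x = \sum_j y j 0 *: col j R.
      by rewrite xE mulmx_sumr; apply: eq_bigr => j _; rewrite -scalemxAr /R colM.
    rewrite Dx (bigID (fun j => col j R != 0)) /= => /esym /eqP.
    rewrite [X in _ + X]big1 ?addr0 // => j; rewrite negbK => /eqP ->; rewrite scaler0.
  done.

have winj : {in [pred k | inZw k && (w k \in W t)] &, injective (fun k => piv (w k))}.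
  move=> [j1|j1] [j2|j2]; rewrite !inE /= => /andP[h1 _] /andP[h2 _] e.
  - congr inl; case: (eqVneq j1 j2) => // /(redRp _ _) /(_ h1 h2); by rewrite e eqxx.
  - exfalso; case/andP: h2 => _ /negP; apply; apply/existsP; exists j1.
    by rewrite h1 e pivV eqxx.
  - exfalso; case/andP: h1 => _ /negP; apply; apply/existsP; exists j2.
    by rewrite h2 -e pivV eqxx.
  - by congr inr; apply: val_inj; rewrite /= -(pivV j1) -(pivV j2).
have snz : forall y, y \in s -> y != 0.
  move=> y /mapP [[j|j]]; rewrite mem_filter => /andP[/andP[h _] _] -> //=.
have suniq : uniq (map (@piv K n) s).
  rewrite /s -map_comp (map_inj_in_uniq (f := fun k => piv (w k))) ?filter_uniq //.
    by have := enum_uniq (T := ('I_n + 'I_n)%type) predT; rewrite enumT unlock.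
  by move=> a b; rewrite !mem_filter => /andP[ha _] /andP[hb _]; apply: winj.
rewrite /basis_of; apply/andP; split; last first.
  change (free (in_tuple s)); apply/freeP => c hc i; apply/eqP; apply: contraTT isT => ci.
  have nzs (a : 'I_(size s)) : true -> s`_a != 0 by move=> _; apply/snz/mem_nth.
  have injs (a b : 'I_(size s)) : true -> true -> piv s`_a = piv s`_b -> a = b.
    move=> _ _ e; apply/val_inj/eqP.
    have la : (a < size (map (@piv K n) s))%N by rewrite size_map ltn_ord.
    have lb : (b < size (map (@piv K n) s))%N by rewrite size_map ltn_ord.
    have := nth_uniq 0%N la lb suniq.
    rewrite (nth_map 0) ?ltn_ord // (nth_map 0) ?ltn_ord // e eqxx => <-.
    by [].
  have [i2 [_ _ nz _]] := @L1 K n 'I_(size s) (fun _ => true) (fun a => s`_a) c i nzs injs isT ci.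
  by move: nz; rewrite hc eqxx.
rewrite eqEsubv; apply/andP; split; first by apply/span_subvP.
have key : forall m (x : 'cV[K]_n), x \in W t -> (forall k : 'I_n, (m <= k)%N -> x k 0 = 0) ->
    x \in <<s>>%VS.
  elim=> [|m IH] x xW hx.
    have -> : x = 0 by apply/matrixP => a b; rewrite (ord1 b) mxE hx.
    exact: mem0v.
  case: (ltnP m n) => [mn | nm]; last first.
    by apply: IH => // k; rewrite leqNgt (leq_trans (ltn_ord k) nm).
  pose im := Ordinal mn.
  have [x0|xnz] := eqVneq (x im 0) 0.
    apply: IH => // k; rewrite leq_eqVlt => /orP [/eqP e| lt]; last exact: hx.
    by have -> : k = im by apply: val_inj.
  have habx : forall k : 'I_n, (im < k)%N -> x k 0 = 0 by move=> k; apply: hx.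
  have pxm : piv x = im by apply: piv_eq.
  have xnz0 : x != 0 by apply: contraNneq xnz => ->; rewrite mxE.
  move: (xW); rewrite memW => /andP[xC /eqP Dx].
  have red : forall u, u \in s -> u im 0 != 0 -> (forall k : 'I_n, (im < k)%N -> u k 0 = 0) ->
       x \in <<s>>%VS.
    move=> u us uim uab.
    pose y := x - (x im 0 / u im 0) *: u.
    have -> : x = y + (x im 0 / u im 0) *: u by rewrite /y subrK.
    apply: memvD; last by apply/memvZ/memv_span.
    apply: IH.
      by apply: memvB => //; apply/memvZ/sW.
    move=> k; rewrite leq_eqVlt => /orP [/eqP e| lt].
      have -> : k = im by apply: val_inj.
      by rewrite !mxE divfK // subrr.
    by rewrite !mxE (hx k lt) (uab k lt) mulr0 subrr.
  case: (boolP (pivs Rphi m)).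
    case/existsP => j /andP[uj /eqP pj].
    have [p [hp up]] := piv_attained uj.
    have pim : p = im by apply: val_inj; rewrite /= hp pj.
    have uab : forall k : 'I_n, (im < k)%N -> col j Rphi k 0 = 0.
      by move=> k hk; apply: piv_above; rewrite pj.
    rewrite pim in up; apply: (red (col j Rphi)) => //.
    apply/mapP; exists (inl j) => //; rewrite mem_filter mem_enum andbT /= uj /=.
    rewrite memW (Dw (inl j)) // eqxx andbT.
    by apply: (mem_below fcC xC xnz0) => k; rewrite pxm; apply: uab.

  move=> npm.
  have Rim := F1 x im Dx xnz habx.
  have uab : forall k : 'I_n, (im < k)%N -> col im V k 0 = 0 by move=> k hk; rewrite mxE Vt.
  apply: (red (col im V)) => //; last by rewrite mxE trig_diag.
  apply/mapP; exists (inr im) => //; rewrite mem_filter mem_enum andbT /= Rim npm /=.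
  rewrite memW -colM -/R (eqP Rim) eqxx andbT.
  by apply: (mem_below fcC xC xnz0) => k; rewrite pxm; apply: uab.
apply/subvP => x xW; apply: (key n) => // k; by rewrite leqNgt ltn_ord.

Qed.
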